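(* Let $B,M,K,L$ be positive integers, $N=BM$, and let $P>0$ and $C>0$. Let $a_{bk}>0$ ($b=1,\dots,B$, $k=1,\dots,K$) and define $v_{ij}=a_{\lceil i/M\rceil j}$ for $i=1,\dots,N$, $j=1,\dots,K$. Define $$\sigma_i^2=\frac{1+\frac{P}{L}\sum_{j=1}^K v_{ij}}{2^{C/(ML)}-1},$$ and for $\tau\ge 0$ $$\hat v_{ij}(\tau)=\frac{\tau\frac{P}{L}v_{ij}^2}{\tau\frac{P}{L}v_{ij}+1+\sigma_i^2},\qquad \tilde v_{ij}(\tau)=\frac{v_{ij}(1+\sigma_i^2)}{\tau\frac{P}{L}v_{ij}+1+\sigma_i^2},\qquad \overline v_{ij}(\tau)=\frac{\hat v_{ij}(\tau)}{1+\sigma_i^2+\frac{P}{L}\sum_{\ell=1}^K\tilde v_{i\ell}(\tau)}.$$ Let $\mathbf D_j(\tau)=\mathrm{diag}(\overline v_{1j}(\tau),\dots,\overline v_{Nj}(\tau))$ and $\mathbf D_j'(\tau)=\frac{d}{d\tau}\mathbf D_j(\tau)=\mathrm{diag}(\overline v'_{1j}(\tau),\dots,\overline v'_{Nj}(\tau))$ for $j=1,\dots,K$. Let $\tau>0$ and assume $0\le \overline v_{ij}(\tau)<v_{\max}<\infty$ for all $i,j$. Let $\mathbf T(z)$ be the $N\times N$ diagonal matrix-valued function defined in the context, let $\mathbf T_P=\mathbf T(-\frac{L}{KP})$, and let $$\overline R(\tau)=\frac1N\sum_{j=1}^K\log\Big(1+\tfrac1K\mathrm{tr}\,\mathbf D_j(\tau)\mathbf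 T_P\Big)-\frac1N\log\det\Big(\tfrac{L}{KP}\mathbf T_P\Big)-\frac1N\sum_{j=1}^K\frac{\frac1K\mathrm{tr}\,\mathbf D_j(\tau)\mathbf T_P}{1+\frac1K\mathrm{tr}\,\mathbf D_j(\tau)\mathbf T_P}$$ (where $\mathbf T_P$ depends on $\tau$ through the $\mathbf D_j(\tau)$). Then $$\overline R'(\tau)=\frac1N\sum_{j=1}^K\frac{\frac1K\mathrm{tr}\,\mathbf D'_j(\tau)\mathbf T_P}{1+\frac1K\mathrm{tr}\,\mathbf D_j(\tau)\mathbf T_P},$$ and moreover $\overline R'(\tau)>0$ for all $P,\tau>0$.
   Context: $\log$ is the natural logarithm. Let $\mathbb C_+=\{z\in\mathbb C:\Im z>0\}$ and let $\mathcal S$ be the class of functions $f$ analytic on $\mathbb C\setminus\mathbb R_+$ such that $f(z)\in\mathbb C_+$ and $zf(z)\in\mathbb C_+$ for $z\in\mathbb C_+$, and $\lim_{y\to\infty}-\mathrm{i}y f(\mathrm{i}y)=1$. For fixed $\tau$, $\mathbf T(z)=\mathrm{diag}(t_1(z),\dots,t_N(z))$ denotes the unique solution with $(t_1,\dots,t_N)\in\mathcal S^N$ of $$\mathbf T(z)=\Big(\frac1K\sum_{j=1}^K\frac{\mathbf D_j(\tau)}{1+\frac1K\mathrm{tr}\,\mathbf D_j(\tau)\mathbf T(z)}-z\mathbf I_N\Big)^{-1}.$$ (Interpretation: $a_{bk}$ is the inverse path loss between user $k$ and base station $b$, each base station has $M$ antennas, $L$ sub-carriers, power $P$, backhaul capacity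 $C$, training length $\tau$.) *)

(* Defs.v *)
From HB Require Import structures.
From mathcomp Require Import all_boot all_order all_algebra.
From mathcomp Require Import all_classical all_reals all_analysis.
From mathcomp Require Import complex.
Import Order.TTheory GRing.Theory Num.Theory numFieldNormedType.Exports.

Set Implicit Arguments.
Unset Strict Implicit.
Unset Printing Implicit Defensive.

Local Open Scope classical_set_scope.
Local Open Scope ring_scope.
Local Open Scope complex_scope.

(* Block index: antenna i (0-based, i < B*M) belongs to base station
   i %/ M (0-based), i.e. ceil((i+1)/M) in 1-based indexing. *)
Lemma blk_proof (B M : nat) (i : 'I_(B * M)) : (i %/ M < B)%N.
Proof.
have := ltn_ord i; move: (nat_of_ord i) => n; clear i.
case: M => [|M]; first by rewrite muln0.
by rewrite ltn_divLR.
Qed.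

Definition blk (B M : nat) (i : 'I_(B * M)) : 'I_B := Ordinal (blk_proof i).

(* The class S of the paper: f analytic (complex differentiable) on C \ R_+,
   f(z) in C_+ and z f(z) in C_+ for z in C_+, and -iy f(iy) -> 1 as y -> +oo. *)
Definition in_S (R : realType) (f : R[i] -> R[i]) : Prop :=
  [/\ (forall z : R[i], ~ (complex.Im z = 0 /\ 0 <= complex.Re z) ->
         derivable (f : (R[i])^o -> (R[i])^o) z 1),
      (forall z : R[i], 0 < complex.Im z -> 0 < complex.Im (f z) /\ 0 < complex.Im (z * f z)) &
      (- 'i * y%:C * f ('i * y%:C)) @[y --> +oo] --> (1 : (R[i])^o)].

Unset Implicit Arguments.
Section Model.
Variables (R : realType) (B M K L : nat) (P C : R) (a : 'I_B -> 'I_K -> R).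
Local Notation N := (B * M)%N.

Definition vv (i : 'I_N) (j : 'I_K) : R := a (blk i) j.

Definition sigma2 (i : 'I_N) : R :=
  (1 + P / L%:R * \sum_(j < K) vv i j) / (2 `^ (C / (M * L)%:R) - 1).

Definition vhat (tau : R) (i : 'I_N) (j : 'I_K) : R :=
  tau * (P / L%:R) * vv i j ^+ 2 / (tau * (P / L%:R) * vv i j + 1 + sigma2 i).

Definition vtil (tau : R) (i : 'I_N) (j : 'I_K) : R :=
  vv i j * (1 + sigma2 i) / (tau * (P / L%:R) * vv i j + 1 + sigma2 i).

Definition vbar (tau : R) (i : 'I_N) (j : 'I_K) : R :=
  vhat tau i j / (1 + sigma2 i + P / L%:R * \sum_(l < K) vtil tau i l).

Definition Dm (tau : R) (j : 'I_K) : 'M[R]_N := diag_mx (\row_i vbar tau i j).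
Definition Dm' (tau : R) (j : 'I_K) : 'M[R]_N :=
  diag_mx (\row_i derive1 (fun s => vbar s i j) tau).

Definition Tmat (t : R -> 'I_N -> R[i] -> R[i]) (tau : R) (z : R[i]) : 'M[R[i]]_N :=
  diag_mx (\row_i t tau i z).

Definition DmC (tau : R) (j : 'I_K) : 'M[R[i]]_N := map_mx (real_complex R) (Dm tau j).

Definition is_T_solution (t : R -> 'I_N -> R[i] -> R[i]) (tau : R) : Prop :=
  (forall i, in_S (t tau i)) /\
  forall z : R[i], ~ (complex.Im z = 0 /\ 0 <= complex.Re z) ->
    Tmat t tau z =
    invmx ((K%:R)^-1 *: (\sum_(j < K)
              ((1 + (K%:R)^-1 * \tr (DmC tau j *m Tmat t tau z))^-1 *: DmC tau j))
           - z%:M).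

(* T_P = T(-L/(KP)), a real (positive) diagonal matrix *)
Definition TP (t : R -> 'I_N -> R[i] -> R[i]) (tau : R) : 'M[R]_N :=
  diag_mx (\row_i complex.Re (t tau i ((- (L%:R / (K%:R * P)))%:C))).

Definition Rbar (t : R -> 'I_N -> R[i] -> R[i]) (tau : R) : R :=
  (N%:R)^-1 * \sum_(j < K) ln (1 + (K%:R)^-1 * \tr (Dm tau j *m TP t tau))
  - (N%:R)^-1 * ln (\det ((L%:R / (K%:R * P)) *: TP t tau))
  - (N%:R)^-1 * \sum_(j < K)
      ((K%:R)^-1 * \tr (Dm tau j *m TP t tau)
       / (1 + (K%:R)^-1 * \tr (Dm tau j *m TP t tau))).

End Model.

(* Main.v *)
Require Import Defs.
From HB Require Import structures.
From mathcomp Require Import all_boot all_order all_algebra.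
From mathcomp Require Import all_classical all_reals all_analysis.
From mathcomp Require Import complex.
From mathcomp Require Import lra ring.
Import Order.TTheory GRing.Theory Num.Theory numFieldNormedType.Exports.
Local Open Scope classical_set_scope.
Local Open Scope ring_scope.
Local Open Scope complex_scope.
Local Close Scope complex_scope.
Local Close Scope classical_set_scope.

Set Implicit Arguments.
Unset Strict Implicit.
Unset Printing Implicit Defensive.
Section Fix.
Variables (R : realType) (n k : nat).

Definition EE (d : 'I_n -> 'I_k -> R) (x : 'I_n -> R) (j : 'I_k) : R :=
  k%:R^-1 * \sum_(i < n) d i j * x i.
Definition AA (d : 'I_n -> 'I_k -> R) (x : 'I_n -> R) (i : 'I_n) : R :=
  k%:R^-1 * \sum_(j < k) (1 + EE d x j)^-1 * d i j.
Definition fixp (c : R) d (x : 'I_n -> R) :=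
  forall i, 0 < x i /\ x i = (AA d x i + c)^-1.
Definition Xi (c : R) d (x : 'I_n -> R) : R :=
  \sum_(j < k) ln (1 + EE d x j) - \sum_(i < n) ln (c * x i)
  + c * \sum_(i < n) x i - n%:R.

Lemma expR_tangent (y m : R) : expR m * (1 + y - m) <= expR y.
Proof.
have := expR_ge1Dx (y - m).
have hm := expR_gt0 m.
rewrite -(ler_pM2l hm) => H.
apply: (le_trans _ (le_trans H _)); first by rewrite addrA.
by rewrite -expRD addrC subrK.
Qed.

Lemma ln_jensen (s : R) (a y : 'I_n -> R) :
  0 < s -> (forall i, 0 <= a i) ->
  (\sum_i a i * y i) / (s + \sum_i a i) <=
  ln (s + \sum_i a i * expR (y i)) - ln (s + \sum_i a i).
Proof.
move=> s0 a0.
have Sa : 0 <= \sum_i a i by apply: sumr_ge0 => i _.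
have T0 : 0 < s + \sum_i a i by lra.
set T := s + \sum_i a i.
set m := (\sum_i a i * y i) / T.
have key : expR m * T <= s + \sum_i a i * expR (y i).
  have h1 : s * (expR m * (1 + 0 - m)) <= s.
    have := expR_tangent 0 m; rewrite expR0 => h.
    by rewrite -[leRHS]mulr1 ler_pM2l.
  have h2 : forall i, a i * (expR m * (1 + y i - m)) <= a i * expR (y i).
    by move=> i; apply: ler_wpM2l => //; apply: expR_tangent.
  have e : expR m * T = s * (expR m * (1 + 0 - m)) + \sum_i a i * (expR m * (1 + y i - m)).
    have eT : m * T = \sum_i a i * y i by rewrite /m mulrVK // unitfE gt_eqF.
    have : \sum_i a i * (expR m * (1 + y i - m)) =
       expR m * (\sum_i a i + \sum_i a i * y i - m * \sum_i a i).
      transitivity (\sum_i expR m * (a i + a i * y i - m * a i)).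
        by apply: eq_bigr => i _; ring.
      by rewrite -mulr_sumr sumrB big_split /= mulr_sumr.
    move=> ->; rewrite -eT /T; ring.
  rewrite e; apply: lerD => //; apply: ler_sum => i _; exact: h2.
have pm : 0 < expR m * T by rewrite mulr_gt0 // expR_gt0.
have pS : 0 < s + \sum_i a i * expR (y i) := lt_le_trans pm key.
have : ln (expR m * T) <= ln (s + \sum_i a i * expR (y i)).
  by rewrite ler_ln ?posrE.
by rewrite lnM ?posrE ?expR_gt0 // expRK; lra.
Qed.


Lemma Xi_min (c : R) d (x0 x : 'I_n -> R) :
  0 < c -> (forall i j, 0 <= d i j) -> fixp c d x0 -> (forall i, 0 < x i) ->
  Xi c d x0 <= Xi c d x.
Proof.
move=> c0 d0 fx x0'.
have hx0 i : 0 < x0 i by case: (fx i).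
have E0 j : 0 <= EE d x0 j.
  by rewrite /EE mulr_ge0 ?invr_ge0 ?ler0n // sumr_ge0 // => i _; rewrite mulr_ge0 // ltW.
set l := fun i => ln (x i / x0 i).
have ex i : x i = x0 i * expR (l i).
  by rewrite /l lnK ?posrE ?divr_gt0 // mulrC divfK // gt_eqF.
set w := fun i j => k%:R^-1 * d i j * x0 i / (1 + EE d x0 j).
have S1 : \sum_j \sum_i w i j * l i <=
          \sum_j ln (1 + EE d x j) - \sum_j ln (1 + EE d x0 j).
  rewrite -sumrB; apply: ler_sum => j _.
  have := @ln_jensen 1 (fun i => k%:R^-1 * d i j * x0 i) l ltr01.
  have a0 i : 0 <= k%:R^-1 * d i j * x0 i.
    by rewrite !mulr_ge0 ?invr_ge0 ?ler0n // ltW.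
  move=> /(_ a0).
  have eA : \sum_i k%:R^-1 * d i j * x0 i = EE d x0 j.
    by rewrite /EE mulr_sumr; apply: eq_bigr => i _; rewrite mulrA.
  have eB : \sum_i k%:R^-1 * d i j * x0 i * expR (l i) = EE d x j.
    by rewrite /EE mulr_sumr; apply: eq_bigr => i _; rewrite ex !mulrA.
  rewrite eA eB; apply: le_trans; rewrite mulr_suml le_eqVlt; apply/orP; left.
  by apply/eqP; apply: eq_bigr => i _; rewrite /w; rewrite mulrAC.
have S2 : \sum_i ln (c * x i) = \sum_i ln (c * x0 i) + \sum_i l i.
  rewrite -big_split; apply: eq_bigr => i _ /=.
  by rewrite ex mulrA lnM ?posrE ?mulr_gt0 ?expR_gt0 // expRK.
have S3 : c * \sum_i x0 i + c * \sum_i x0 i * l i <= c * \sum_i x i.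
  rewrite -mulrDr ler_pM2l // -big_split; apply: ler_sum => i _ /=.
  rewrite ex -[X in X + _]mulr1 -mulrDr ler_pM2l //.
  have := expR_ge1Dx (l i); by [].
have Z : \sum_j \sum_i w i j * l i - \sum_i l i + c * \sum_i x0 i * l i = 0.
  rewrite exchange_big /= mulr_sumr -sumrB -big_split /=.
  apply: big1 => i _.
  have e1 : \sum_j w i j = x0 i * AA d x0 i.
    rewrite /AA mulr_sumr mulr_sumr; apply: eq_bigr => j _; rewrite /w.
    by rewrite /=; ring.
  have e2 : x0 i * (AA d x0 i + c) = 1.
    case: (fx i) => p e; rewrite {1}e mulVf //.
    by apply: contraTneq p => h; rewrite e h invr0 ltxx.
  have e3 : \sum_j w i j * l i = x0 i * AA d x0 i * l i by rewrite -e1 mulr_suml.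
  rewrite e3.
  have -> : x0 i * AA d x0 i * l i - l i + c * (x0 i * l i) = (x0 i * (AA d x0 i + c) - 1) * l i by ring.
  by rewrite e2 subrr mul0r.
rewrite /Xi; lra.
Qed.

End Fix.

Section Cmp.
Variables (R : realType) (n k : nat).

Lemma fixp_pos (c : R) (d : 'I_n -> 'I_k -> R) (x : 'I_n -> R) : fixp c d x -> forall i, 0 < x i.
Proof. by move=> f i; case: (f i). Qed.

Lemma EE_ge0 (d : 'I_n -> 'I_k -> R) (x : 'I_n -> R) :
  (forall i j, 0 <= d i j) -> (forall i, 0 <= x i) -> forall j, 0 <= EE d x j.
Proof.
move=> d0 x0 j; rewrite /EE mulr_ge0 ?invr_ge0 ?ler0n // sumr_ge0 // => i _.
exact: mulr_ge0.
Qed.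

Lemma fix_compare (c : R) (d d' : 'I_n -> 'I_k -> R) (x x' : 'I_n -> R) (al S : R) :
  0 < c -> 1 <= al -> (forall i j, 0 <= d i j) ->
  (forall i j, d i j <= al * d' i j) -> (forall i j, d' i j <= al * d i j) ->
  (forall i, k%:R^-1 * \sum_j d i j <= S) ->
  fixp c d x -> fixp c d' x' ->
  forall i, x' i <= (1 + (al * al - 1) * S / c) * x i.
Proof.
move=> c0 al1 d0 dl du hS fx fx' i.
have al0 : 0 < al := lt_le_trans ltr01 al1.
have d0' i1 j : 0 <= d' i1 j.
  have := le_trans (d0 i1 j) (dl i1 j).
  by rewrite pmulr_rge0.
have hx := fixp_pos fx; have hx' := fixp_pos fx'.
set F := fun i1 => x' i1 / x i1.
have [i0 _ Hmax] : exists2 i0, true & forall i1, F i1 <= F i0.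
  case: (@arg_maxP _ _ _ i xpredT F isT) => j _ H; exists j => // i1; exact: H.
set b := F i0.
have xb i1 : x' i1 <= b * x i1 by rewrite -ler_pdivrMr ?hx //; exact: Hmax.
have S0 : 0 <= S.
  apply: le_trans (hS i); rewrite mulr_ge0 ?invr_ge0 ?ler0n // sumr_ge0 // => j _.
have q1 : 1 <= al * al by rewrite -[1]mulr1 ler_pM.
have B1 : 1 <= 1 + (al * al - 1) * S / c.
  rewrite lerDl mulr_ge0 ?invr_ge0 ?(ltW c0) // mulr_ge0 // subr_ge0 //.
have [b1|b1] := leP b 1.
  apply: le_trans (xb i) _; apply: ler_wpM2r; first exact: ltW.
  exact: le_trans b1 B1.
suff bB : b <= 1 + (al * al - 1) * S / c.
  by apply: le_trans (xb i) _; apply: ler_wpM2r; [exact: ltW|].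
set A := AA d x i0.
set q := al * al.
have E0 := EE_ge0 d0 (fun i => ltW (hx i)).
have E0' := EE_ge0 d0' (fun i => ltW (hx' i)).
have EE' j : EE d' x' j <= al * b * EE d x j.
  rewrite /EE mulrCA; apply: ler_wpM2l; first by rewrite invr_ge0 ler0n.
  rewrite mulr_sumr; apply: ler_sum => l _.
  have -> : al * b * (d l j * x l) = (al * d l j) * (b * x l) by ring.
  by apply: ler_pM; [exact: d0'|exact: ltW|exact: du|exact: xb].
have A0 : 0 <= A.
  rewrite /A /AA mulr_ge0 ?invr_ge0 ?ler0n // sumr_ge0 // => j0 _.
  by rewrite mulr_ge0 // invr_ge0 addr_ge0.
have b0 : 0 < b := lt_trans ltr01 b1.
have ab1 : 1 <= al * b by rewrite -[1]mulr1 ler_pM // ltW.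
have AA' : A / (q * b) <= AA d' x' i0.
  rewrite /A /AA -mulrA; apply: ler_wpM2l; first by rewrite invr_ge0 ler0n.
  rewrite mulr_suml; apply: ler_sum => j _.
  have p1 : 0 < 1 + EE d' x' j by have := E0' j; lra.
  have p0 : 0 < 1 + EE d x j by have := E0 j; lra.
  have p2 : 0 < al * b * (1 + EE d x j) by rewrite mulr_gt0 // (lt_le_trans ltr01 ab1).
  have h1 : (al * b * (1 + EE d x j))^-1 <= (1 + EE d' x' j)^-1.
    rewrite lef_pV2 ?posrE //.
    apply: le_trans (_ : 1 + al * b * EE d x j <= _).
      by rewrite lerD2l.
    by rewrite mulrDr mulr1 lerD2r.
  have -> : (1 + EE d x j)^-1 * d i0 j / (q * b) =
            (al * b * (1 + EE d x j))^-1 * (d i0 j / al).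
    rewrite /q; field.
    by rewrite (gt_eqF al0) (gt_eqF p0) (gt_eqF b0).
  apply: ler_pM.
  - by rewrite invr_ge0 ltW.
  - by rewrite divr_ge0 // ltW.
  - exact: h1.
  - by rewrite ler_pdivrMr // mulrC.
have ex' : x' i0 = (AA d' x' i0 + c)^-1 by case: (fx' i0).
have ex : x i0 = (A + c)^-1 by case: (fx i0).
have bx : b * x i0 = x' i0 by rewrite /b /F divfK // gt_eqF.
have q0 : 0 < q := lt_le_trans ltr01 q1.
set u := A / (q * b) + c.
have v0 : 0 < A + c by lra.
have u0 : 0 < u.
  have : 0 <= A / (q * b) by rewrite divr_ge0 // ltW // mulr_gt0.
  rewrite /u; lra.
have h : x' i0 <= u^-1.
  by rewrite ex' lef_pV2 ?posrE ?(lt_le_trans u0) // lerD2r.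
rewrite -bx ex in h.
have := h; rewrite -(ler_pM2r (mulr_gt0 u0 v0)).
have -> : b / (A + c) * (u * (A + c)) = b * u by field; rewrite ?(gt_eqF v0) ?(gt_eqF u0) ?(gt_eqF q0) ?(gt_eqF b0).
have -> : u^-1 * (u * (A + c)) = A + c by field; rewrite ?(gt_eqF v0) ?(gt_eqF u0) ?(gt_eqF q0) ?(gt_eqF b0).
have -> : b * u = A / q + b * c by rewrite /u; field; rewrite ?(gt_eqF v0) ?(gt_eqF u0) ?(gt_eqF q0) ?(gt_eqF b0).
move=> key.
have key2 : A + q * b * c <= q * A + q * c.
  have := key; rewrite -(ler_pM2l q0).
  have -> : q * (A / q + b * c) = A + q * b * c by field; rewrite ?(gt_eqF v0) ?(gt_eqF u0) ?(gt_eqF q0) ?(gt_eqF b0).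
  by rewrite mulrDr.
have hA : A <= S.
  apply: le_trans (hS i0); rewrite /A /AA; apply: ler_wpM2l; first by rewrite invr_ge0 ler0n.
  apply: ler_sum => j _; apply: ler_piMl => //.
  by rewrite invf_le1 ?lerDl //; have := E0 j; lra.
rewrite -lerBlDl ler_pdivlMr //.
have t1 : (b - 1) * c <= q * ((b - 1) * c).
  by apply: ler_peMl => //; rewrite mulr_ge0 // ?subr_ge0 ltW.
have t2 : q * ((b - 1) * c) = q * b * c - q * c by ring.
have t3 : (q - 1) * A <= (q - 1) * S by apply: ler_wpM2l => //; rewrite subr_ge0.
have t4 : (q - 1) * A = q * A - A by ring.
lra.
Qed.

End Cmp.

Section Small.
Variable R : realType.

Lemma absB (u D e : R) : `|u - D| <= e -> D - e <= u /\ u <= D + e.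
Proof.
move=> h; have h1 := ler_norm (u - D); have h2 := ler_norm (D - u).
rewrite distrC in h2; lra.
Qed.

Lemma abs_lb (D : R) : - `|D| <= D /\ D <= `|D|.
Proof. have := ler_norm (- D); rewrite normrN; have := ler_norm D; lra. Qed.

Lemma small0 (a C dl : R) : 0 < dl -> 0 <= C ->
  (forall e, 0 < e -> e < dl -> - (C * e) < a) -> 0 <= a.
Proof.
move=> d0 C0 H; rewrite leNgt; apply/negP => a0.
have C1 : 0 < C + 1 by lra.
set e := Num.min (dl / 2) (- a / (C + 1)).
have e0 : 0 < e by rewrite /e lt_min divr_gt0 //= divr_gt0 // oppr_gt0.
have edl : e < dl by rewrite /e gt_min; apply/orP; left; lra.
have := H e e0 edl.
have : e <= - a / (C + 1) by rewrite /e ge_min lexx orbT.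
rewrite ler_pdivlMr // => h1 h2.
have : C * e <= (C + 1) * e by rewrite ler_pM2r //; lra.
lra.
Qed.

Lemma small1 (a : R) : (forall e, 0 < e -> - e < a) -> 0 <= a.
Proof.
move=> H; rewrite leNgt; apply/negP => a0.
have := H (- a); rewrite oppr_gt0 opprK => /(_ a0); rewrite ltxx.
by [].
Qed.

Lemma real_core (x0 If Rf ReD ImD : R) : x0 < 0 ->
 (forall et, 0 < et -> exists dl, 0 < dl /\ forall e, 0 < e -> e < dl ->
    exists ru iu, `|ru - ReD| <= et /\ `|iu - ImD| <= et /\
      0 < If + e * ru /\ 0 < x0 * (If + e * ru) + e * (Rf - e * iu)) ->
 If = 0 /\ 0 <= Rf.
Proof.
move=> x00 H.
have [dl [dl0 Hd]] := H 1 ltr01.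
have If0 : 0 <= If.
  apply: (small0 (C := `|ReD| + 1) dl0); first by rewrite addr_ge0.
  move=> e e0 edl; have [ru [iu [h1 [h2 [h3 h4]]]]] := Hd e e0 edl.
  have : ru <= `|ReD| + 1.
    have := ler_norm (ru - ReD); have := ler_norm ReD; lra.
  rewrite -(ler_pM2l e0) => h5.
  have -> : (`|ReD| + 1) * e = e * (`|ReD| + 1) by rewrite mulrC.
  lra.
have If1 : 0 <= x0 * If.
  apply: (small0 (C := - x0 * (`|ReD| + 1) + `|Rf| + dl * (`|ImD| + 1)) dl0).
    have : 0 <= - x0 * (`|ReD| + 1) by rewrite mulr_ge0 //; lra.
    have := normr_ge0 Rf; have : 0 <= dl * (`|ImD| + 1) by rewrite mulr_ge0 //; lra.
    lra.
  move=> e e0 edl; have [ru [iu [h1 [h2 [h3 h4]]]]] := Hd e e0 edl.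
  have hru : - (`|ReD| + 1) <= ru.
    have := absB h1; have := abs_lb ReD; lra.
  have hiu : - (`|ImD| + 1) <= iu.
    have := absB h2; have := abs_lb ImD; lra.
  have hRf := ler_norm Rf.
  have t1 : x0 * ru <= - x0 * (`|ReD| + 1).
    have : 0 <= ru + (`|ReD| + 1) by lra.
    nra.
  have t2 : - (e * iu) <= dl * (`|ImD| + 1).
    have : 0 <= `|ImD| + 1 by have := normr_ge0 ImD; lra.
    nra.
  have hB : x0 * ru + Rf - e * iu <= - x0 * (`|ReD| + 1) + `|Rf| + dl * (`|ImD| + 1) by lra.
  have := ler_wpM2l (ltW e0) hB.
  nra.
have IfE : If = 0 by nra.
split => //.
have ReD0 : 0 <= ReD.
  apply: small1 => et et0.
  have [dl' [dl0' Hd']] := H et et0.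
  have e0 : 0 < dl' / 2 by lra.
  have e1 : dl' / 2 < dl' by lra.
  have [ru [iu [h1 [h2 [h3 h4]]]]] := Hd' (dl' / 2) e0 e1.
  rewrite IfE add0r pmulr_rgt0 // in h3.
  have := absB h1; lra.
have Rfb : forall et, 0 < et -> 0 <= Rf - x0 * et.
  move=> et et0; have [dl' [dl0' Hd']] := H et et0.
  apply: (small0 (C := `|ImD| + et) dl0'); first by have := normr_ge0 ImD; lra.
  move=> e e0 edl; have [ru [iu [h1 [h2 [h3 h4]]]]] := Hd' e e0 edl.
  have h5 : 0 < x0 * ru + Rf - e * iu.
    have ee : x0 * (If + e * ru) + e * (Rf - e * iu) = e * (x0 * ru + Rf - e * iu).
      by rewrite IfE; ring.
    by rewrite ee pmulr_rgt0 in h4.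
  have [a1 a2] := absB h1; have [b1 b2] := absB h2; have [c1 c2] := abs_lb ImD.
  have t1 : x0 * ru <= x0 * (ReD - et) by nra.
  have t0 : x0 * ReD <= 0 by nra.
  have t2 : - (e * iu) <= e * (`|ImD| + et) by nra.
  lra.
apply: small1 => et et0.
have q0 : 0 < et / (2 * - x0) by rewrite divr_gt0 //; lra.
have := Rfb _ q0.
have -> : x0 * (et / (2 * - x0)) = - et / 2 by field; rewrite ?mulf_neq0 //; lra.
lra.
Qed.
End Small.

From mathcomp Require Import complex.
Section SPart.
Variable R : realType.
Local Open Scope complex_scope.

Lemma deriv_eps (f : R[i] -> R[i]) (z : R[i]) :
 derivable (f : (R[i])^o -> (R[i])^o) z 1 ->
 exists D : R[i], forall e : R, 0 < e -> exists d : R, 0 < d /\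
   forall h : R[i], h != 0 -> `|h| < d%:C -> `|D - h^-1 * (f (h + z) - f z)| <= e%:C.
Proof.
move=> /cvg_ex [D HD]; exists D => e e0.
move/cvgrPdist_le: HD => /(_ e%:C).
rewrite ltcR => /(_ e0).
rewrite /dnbhs /within /= => /nbhs_normP [d /= d0 Hd].
have dR : d = (Re d)%:C.
  by case: d d0 {Hd} => a b; rewrite ltcE /= => /andP[/eqP -> _].
exists (Re d); split.
  by move: d0; rewrite ltcE /= => /andP[].
move=> h h0 hd.
rewrite -dR in hd.
have := Hd h; rewrite /ball_ /= sub0r normrN => /(_ hd h0).
have -> : h%:A = h by rewrite /GRing.scale /= mulr1.
by [].
Qed.

Lemma normc_Re (x : R[i]) : `|Re x| <= Re `|x|.
Proof. by have := normc_ge_Re x; rewrite lecE => /andP[_]. Qed.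

Lemma normc_Im (x : R[i]) : `|Im x| <= Re `|x|.
Proof.
have := normc_Re (x * 'i); rewrite ReiNIm normrN normrM.
have -> : `|'i : R[i]| = 1.
  by rewrite normc_def /= expr0n expr1n add0r sqrtr1.
by rewrite mulr1.
Qed.

Lemma norm_ie (e : R) : 0 < e -> `|'i * e%:C| = e%:C.
Proof.
move=> e0; rewrite normc_def /=; simpc.
by rewrite expr0n add0r sqrtr_sqr ger0_norm // ltW.
Qed.

Lemma S_real_pos (f : R[i] -> R[i]) (x0 : R) : x0 < 0 -> in_S f ->
  complex.Im (f x0%:C) = 0 /\ 0 <= complex.Re (f x0%:C).
Proof.
move=> x00 [hder hpos _].
have nz : ~ (complex.Im x0%:C = 0 /\ 0 <= complex.Re x0%:C).
  by case=> _ /=; rewrite leNgt x00.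
have [D HD] := deriv_eps (hder _ nz).
apply: (@real_core R x0 _ _ (complex.Re D) (complex.Im D) x00).
move=> et et0; have [dl [dl0 Hd]] := HD et et0.
exists dl; split => // e e0 edl.
set h : R[i] := 'i * e%:C.
have hn : `|h| = e%:C by apply: norm_ie.
have h0 : h != 0.
  apply/negP => /eqP h0; move: hn; rewrite h0 normr0 => /complexI/eqP.
  by rewrite eq_sym (gt_eqF e0).
have hd : `|h| < dl%:C by rewrite hn ltcR.
have w := Hd h h0 hd.
set u := h^-1 * (f (h + x0%:C) - f x0%:C) in w.
exists (complex.Re u), (complex.Im u).
have w' : Re `|D - u| <= et by move: w; rewrite lecE => /andP[_].
have eRe : complex.Re u - complex.Re D = - complex.Re (D - u) by case: (D) (u) => ? ? [? ?] /=; rewrite opprB.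
have eIm : complex.Im u - complex.Im D = - complex.Im (D - u) by case: (D) (u) => ? ? [? ?] /=; rewrite opprB.
split; first by rewrite eRe normrN; apply: le_trans (normc_Re _) w'.
split; first by rewrite eIm normrN; apply: le_trans (normc_Im _) w'.
have eF : f (h + x0%:C) = f x0%:C + h * u.
  by rewrite /u mulrA divff // mul1r [f x0%:C + _]addrC subrK.
have him : 0 < complex.Im (h + x0%:C) by rewrite /h /=; simpc.
have [p1 p2] := hpos _ him.
rewrite eF in p1 p2.
move: p1 p2; rewrite /h.
case: (f x0%:C) => a b; case: (u) => c d /=; simpc.
by move=> p1 p2; split.
Qed.

End SPart.

From mathcomp Require Import complex.
Lemma inv_diag (F : fieldType) (n : nat) (r : 'rV[F]_n) :
  (forall i, r 0 i != 0) -> invmx (diag_mx r) = diag_mx (\row_i (r 0 i)^-1).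
Proof.
move=> rn.
have H : diag_mx r *m diag_mx (\row_i (r 0 i)^-1) = 1%:M.
  rewrite mulmx_diag; apply/matrixP => i j; rewrite !mxE.
  by case: (i == j) => //=; rewrite ?mulr1n ?mulr0n // divff.
have U : diag_mx r \in unitmx.
  by rewrite unitmxE det_diag unitfE; apply/prodf_neq0 => i _.
by rewrite -[RHS](mulKmx U) H mulmx1.
Qed.

Section TFix.
Local Open Scope complex_scope.
Variables (R : realType) (B M K L : nat) (P C : R) (a : 'I_B -> 'I_K -> R)
  (t : R -> 'I_(B * M) -> R[i] -> R[i]).
Local Notation N := (B * M)%N.
Local Notation vb := (vbar R B M K L P C a).
Local Notation cc := (L%:R / (K%:R * P) : R).
Local Notation z0 := ((- (L%:R / (K%:R * P)))%:C : R[i]).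

Lemma DmCE s j : DmC R B M K L P C a s j = diag_mx (\row_i ((vb s i j)%:C : R[i])).
Proof.
apply/matrixP => i i'; rewrite !mxE.
by case: (i == i') => //=; rewrite mulr1n // mulr0n.
Qed.

Lemma Tsol_fix s : (0 < K)%N -> (0 < L)%N -> 0 < P ->
  is_T_solution R B M K L P C a t s -> (forall i j, 0 <= vb s i j) ->
  fixp cc (fun i j => vb s i j) (fun i => complex.Re (t s i z0)).
Proof.
move=> K0 L0 P0 [hS heq] d0.
have c0 : 0 < cc by rewrite divr_gt0 ?mulr_gt0 ?ltr0n.
set x := fun i => complex.Re (t s i z0).
have hx i : t s i z0 = (x i)%:C /\ 0 <= x i.
  have xl : - cc < 0 by rewrite oppr_lt0.
  have [h1 h2] := S_real_pos xl (hS i).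
  rewrite /x; move: h1 h2; case: (t s i _) => r q /= -> h2; split => //.
have Tm : Tmat R B M t s z0 = diag_mx (\row_i (x i)%:C).
  by apply/matrixP=> i j; rewrite !mxE (hx i).1.
have nz : ~ (complex.Im z0 = 0 /\ 0 <= complex.Re z0).
  by case=> _ /=; rewrite oppr_ge0 leNgt c0.
have E := heq z0 nz; rewrite Tm in E.
set d := fun i j => vb s i j.
have trE j : 1 + K%:R^-1 * \tr (DmC R B M K L P C a s j *m diag_mx (\row_i (x i)%:C))
             = (1 + EE d x j)%:C.
  rewrite DmCE mulmx_diag mxtrace_diag /EE.
  rewrite rmorphD rmorph1 rmorphM fmorphV rmorph_nat rmorph_sum.
  congr (_ + _); congr (_ * _); apply: eq_bigr => i _.
  by rewrite [RHS]rmorphM !mxE.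
have ME : K%:R^-1 *: \sum_(j < K) (1 + K%:R^-1 * \tr (DmC R B M K L P C a s j *m
            diag_mx (\row_i (x i)%:C)))^-1 *: DmC R B M K L P C a s j - z0%:M
          = diag_mx (\row_i ((AA d x i + cc)%:C)).
  under eq_bigr => j _ do rewrite trE DmCE.
  apply/matrixP => i i'; rewrite !mxE summxE.
  under eq_bigr => j _ do rewrite !mxE.
  under eq_bigr => j _ do rewrite mulrnAr.
  rewrite sumrMnl mulrnAr -mulrnBl; congr (_ *+ _).
  rewrite /AA rmorphD rmorphM fmorphV rmorph_nat rmorph_sum rmorphN opprK.
  congr (_ * _ + _); apply: eq_bigr => j _.
  by rewrite [RHS]rmorphM fmorphV.
have xp i : 0 <= x i := (hx i).2.
have A0 i : 0 < AA d x i + cc.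
  have : 0 <= AA d x i.
    rewrite /AA mulr_ge0 ?invr_ge0 ?ler0n // sumr_ge0 // => j _.
    rewrite mulr_ge0 // invr_ge0; have := EE_ge0 d0 xp j; lra.
  lra.
rewrite ME inv_diag in E; last first.
  by move=> i; rewrite mxE; apply/negP => /eqP/complexI/eqP; rewrite gt_eqF.
move=> i; move/matrixP: E => /(_ i i); rewrite !mxE eqxx /= !mulr1n.
rewrite -fmorphV => /complexI ->; split => //.
by rewrite invr_gt0.
Qed.
End TFix.

Lemma is_derive_lin (R : realType) (al be x : R) :
  is_derive x 1 (fun s : R => al * s + be) al.
Proof.
have -> : (fun s : R => al * s + be) = (al \*: id) + cst be.
  by apply/funext => s /=; rewrite /GRing.scale.
have H := is_deriveD (is_deriveZ al (is_derive_id x (1 : R))) (is_derive_cst be x (1 : R)).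
apply: is_derive_eq H _.
by rewrite addr0 /GRing.scale /= mulr1.
Qed.

Section VB.
Variables (R : realType) (B M K L : nat) (P C : R) (a : 'I_B -> 'I_K -> R).
Local Notation N := (B * M)%N.
Local Notation p := (P / L%:R).
Hypotheses (L0 : (0 < L)%N) (M0 : (0 < M)%N) (P0 : 0 < P) (C0 : 0 < C) (a0 : forall b k, 0 < a b k).

Lemma p_gt0 : 0 < p. Proof. by rewrite divr_gt0 ?ltr0n. Qed.

Lemma vv_gt0 i j : 0 < vv R B M K a i j. Proof. exact: a0. Qed.

Lemma sigma2_gt0 i : 0 < sigma2 R B M K L P C a i.
Proof.
rewrite /sigma2 divr_gt0 //.
  rewrite ltr_pwDl ?ltr01 // mulr_ge0 ?(ltW p_gt0) // sumr_ge0 // => j _.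
  exact: ltW (vv_gt0 _ _).
have e0 : 0 < C / (M * L)%:R by rewrite divr_gt0 // ltr0n muln_gt0 M0 L0.
rewrite subr_gt0 lt_neqAle; apply/andP; split.
  apply/negP; rewrite eq_sym powR_eq1 => /or3P [/eqP h|h|/eqP h].
  - by move: h; lra.
  - by move: h; lra.
  - by move: h e0; lra.
have h12 : (1 : R) <= 2 by rewrite ler1n.
have h := @ler_powR R 2 h12 0 (C / (M * L)%:R) (ltW e0).
by rewrite powRr0 in h.
Qed.


Local Notation sg := (sigma2 R B M K L P C a).
Local Notation v := (vv R B M K a).
Definition ee (s : R) i l := s * p * v i l + 1 + sg i.
Definition vhat' (s : R) i j :=
  s * p * v i j ^+ 2 * (- (ee s i j) ^- 2 * (p * v i j)) + (ee s i j)^-1 * (p * v i j ^+ 2).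
Definition vtil' (s : R) i l := v i l * (1 + sg i) * (- (ee s i l) ^- 2 * (p * v i l)).
Definition den (s : R) i := 1 + sg i + p * \sum_(l < K) vtil R B M K L P C a s i l.
Definition den' (s : R) i := p * \sum_(l < K) vtil' s i l.
Definition vbar' (s : R) i j :=
  vhat R B M K L P C a s i j * (- (den s i) ^- 2 * den' s i) + (den s i)^-1 * vhat' s i j.

Lemma ee_gt0 s i l : 0 <= s -> 0 < ee s i l.
Proof.
move=> s0; rewrite /ee; have := sigma2_gt0 i; have : 0 <= s * p * v i l.
  by rewrite !mulr_ge0 // ltW // ?p_gt0 ?vv_gt0.
lra.
Qed.

Lemma is_derive_fun (f g : R -> R) (x df : R) : f = g -> is_derive x (1 : R) g df -> is_derive x (1 : R) f df.
Proof. by move=> ->. Qed.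

Lemma is_derive_ee (s : R) i l : is_derive s (1 : R) (fun s => ee s i l) (p * v i l).
Proof.
apply: (is_derive_fun _ (is_derive_lin (p * v i l) (1 + sg i) s)).
by apply/funext => y; rewrite /ee; ring.
Qed.

Lemma is_derive_einv (s : R) i l : 0 <= s ->
  is_derive s (1 : R) (fun s => (ee s i l)^-1) (- (ee s i l) ^- 2 * (p * v i l)).
Proof.
move=> s0.
exact: (@is_deriveV R (fun s => ee s i l) s (p * v i l) 1 (negbT (gt_eqF (ee_gt0 i l s0))) (is_derive_ee s i l)).
Qed.


Lemma is_derive_vtil (s : R) i l : 0 <= s ->
  is_derive s (1 : R) (fun s => vtil R B M K L P C a s i l) (vtil' s i l).
Proof.
move=> s0.
have H := is_deriveZ (v i l * (1 + sg i)) (is_derive_einv i l s0).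
apply: (is_derive_fun _ H).
by apply/funext => y; rewrite /vtil /ee /GRing.scale /=.
Qed.

Lemma is_derive_den (s : R) i : 0 <= s ->
  is_derive s (1 : R) (fun s => den s i) (den' s i).
Proof.
move=> s0.
have H1 := @is_derive_sum R _ _ K (fun l s => vtil R B M K L P C a s i l) s 1 _
   (fun l => is_derive_vtil i l s0).
have H2 := is_deriveD (is_derive_cst (1 + sg i) s (1 : R)) (is_deriveZ p H1).
apply: (is_derive_fun _ (is_derive_eq H2 _)).
  by apply/funext => y; rewrite /den /GRing.scale /= fct_sumE.
by rewrite add0r /den' /GRing.scale.
Qed.

Lemma is_derive_vhat (s : R) i j : 0 <= s ->
  is_derive s (1 : R) (fun s => vhat R B M K L P C a s i j) (vhat' s i j).
Proof.
move=> s0.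
have Hn : is_derive s (1 : R) (fun y => y * p * v i j ^+ 2) (p * v i j ^+ 2).
  apply: (is_derive_fun _ (is_derive_lin (p * v i j ^+ 2) 0 s)).
  by apply/funext => y; rewrite addr0; ring.
have H := is_deriveM Hn (is_derive_einv i j s0).
apply: (is_derive_fun _ (is_derive_eq H _)).
  by apply/funext => y.
by [].
Qed.

Lemma vhat_ge0 (s : R) i j : 0 <= s -> 0 <= vhat R B M K L P C a s i j.
Proof.
move=> s0.
have h1 : 0 <= s * p * v i j ^+ 2.
  by rewrite !mulr_ge0 // ?exprn_ge0 // ltW ?p_gt0 ?vv_gt0.
have h2 := ee_gt0 i j s0; rewrite /ee in h2.
by rewrite /vhat divr_ge0 // ltW.
Qed.

Lemma vtil_ge0 (s : R) i l : 0 <= s -> 0 <= vtil R B M K L P C a s i l.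
Proof.
move=> s0.
have h1 : 0 <= v i l * (1 + sg i).
  by rewrite mulr_ge0 ?ltW ?vv_gt0 //; have := sigma2_gt0 i; lra.
have h2 := ee_gt0 i l s0; rewrite /ee in h2.
by rewrite /vtil divr_ge0 // ltW.
Qed.

Lemma den_gt0 (s : R) i : 0 <= s -> 0 < den s i.
Proof.
move=> s0; rewrite /den.
have : 0 <= p * \sum_(l < K) vtil R B M K L P C a s i l.
  by rewrite mulr_ge0 ?(ltW p_gt0) // sumr_ge0 // => l _; apply: vtil_ge0.
have := sigma2_gt0 i; lra.
Qed.

Lemma vhat'_gt0 (s : R) i j : 0 <= s -> 0 < vhat' s i j.
Proof.
move=> s0; have e0 := ee_gt0 i j s0.
have -> : vhat' s i j = p * v i j ^+ 2 * (1 + sg i) / (ee s i j) ^+ 2.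
  rewrite /vhat'; set e := ee s i j.
  have eE : 1 + sg i = e - s * p * v i j by rewrite /e /ee; ring.
  rewrite eE; set q := p; set w := v i j.
  have en : e != 0 by rewrite gt_eqF.
  by field.
rewrite divr_gt0 ?exprn_gt0 //; apply: mulr_gt0.
  by apply: mulr_gt0; [exact: p_gt0 | exact: exprn_gt0 (vv_gt0 _ _)].
by have := sigma2_gt0 i; lra.
Qed.


Lemma is_derive_vbar (s : R) i j : 0 <= s ->
  is_derive s (1 : R) (fun s => vbar R B M K L P C a s i j) (vbar' s i j).
Proof.
move=> s0.
have H := is_deriveM (is_derive_vhat i j s0)
  (@is_deriveV R (fun s => den s i) s (den' s i) 1 (negbT (gt_eqF (den_gt0 i s0))) (is_derive_den i s0)).
apply: (is_derive_fun _ (is_derive_eq H _)).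
  by apply/funext => y.
by [].
Qed.

Lemma den'_le0 (s : R) i : 0 <= s -> den' s i <= 0.
Proof.
move=> s0; rewrite /den' pmulr_rle0 ?p_gt0 //.
rewrite -oppr_ge0 -sumrN sumr_ge0 // => l _; rewrite /vtil' oppr_ge0.
rewrite pmulr_rle0; last first.
  by rewrite mulr_gt0 ?vv_gt0 //; have := sigma2_gt0 i; lra.
rewrite mulNr oppr_le0 mulr_ge0 // ?invr_ge0 ?exprn_ge0 //; last by rewrite mulr_ge0 ?ltW ?p_gt0 ?vv_gt0.
exact: ltW (ee_gt0 i l s0).
Qed.

Lemma vbar'_gt0 (s : R) i j : 0 <= s -> 0 < vbar' s i j.
Proof.
move=> s0; rewrite /vbar'.
have h1 : 0 <= vhat R B M K L P C a s i j * (- den s i ^- 2 * den' s i).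
  rewrite mulr_ge0 ?vhat_ge0 // mulNr -mulrN mulr_ge0 ?oppr_ge0 ?den'_le0 //.
  by rewrite invr_ge0 exprn_ge0 // ltW // den_gt0.
have h2 : 0 < (den s i)^-1 * vhat' s i j by rewrite mulr_gt0 ?invr_gt0 ?den_gt0 ?vhat'_gt0.
lra.
Qed.

Lemma vbar_gt0 (s : R) i j : 0 < s -> 0 < vbar R B M K L P C a s i j.
Proof.
move=> s0; rewrite /vbar divr_gt0 //; last by apply: (den_gt0 i (ltW s0)).
have h2 := ee_gt0 i j (ltW s0); rewrite /ee in h2.
rewrite /vhat divr_gt0 //; apply: mulr_gt0; last by rewrite exprn_gt0 ?vv_gt0.
by rewrite mulr_gt0 ?p_gt0.
Qed.

End VB.

Unset Implicit Arguments.
Local Open Scope classical_set_scope.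
Local Open Scope ring_scope.

Section Abs.
Variables (R : realType) (n k : nat) (c : R) (d : R -> 'I_n -> 'I_k -> R)
  (x : R -> 'I_n -> R) (tau : R).
Hypotheses (c0 : 0 < c) (tau0 : 0 < tau)
  (hfix : forall s, 0 < s -> fixp c (d s) (x s))
  (hd0 : forall s, 0 < s -> forall i j, 0 < d s i j)
  (hdc : forall i j, d (tau + h) i j @[h --> (0:R)^'] --> d tau i j).

Lemma near_dn (P : R -> Prop) : (\forall h \near (0 : R), P h) -> \forall h \near (0:R)^', P h.
Proof.
move=> H; rewrite /dnbhs /within /=; apply: filterS H => y hy _; exact: hy.
Qed.

Lemma near_pos : \forall h \near (0:R)^', 0 < tau + h.
Proof.
apply: near_dn; apply/nbhs_normP; exists tau => //= h.
rewrite /ball_ /= sub0r normrN => H.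
have := ler_norm (- h); rewrite normrN; lra.
Qed.

Lemma x_cont i : x (tau + h) i @[h --> (0:R)^'] --> x tau i.
Proof.
apply/cvgrPdist_le => eps eps0.
have xt0 : 0 < x tau i by case: (hfix tau tau0 i).
set xt := x tau i.
set eta := eps / xt.
have eta0 : 0 < eta by rewrite divr_gt0.
set S0 := \sum_(i' < n) k%:R^-1 * \sum_(j < k) d tau i' j.
have hS0 i' : k%:R^-1 * \sum_(j < k) d tau i' j <= S0.
  rewrite /S0 (bigD1 i') //= lerDl sumr_ge0 // => l _.
  rewrite mulr_ge0 ?invr_ge0 ?ler0n // sumr_ge0 // => j _; exact: ltW (hd0 tau tau0 _ _).
have S00 : 0 <= S0 by apply: le_trans (hS0 i); rewrite mulr_ge0 ?invr_ge0 ?ler0n // sumr_ge0 // => j _; exact: ltW (hd0 tau tau0 _ _).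
set gm := Num.min 1 (eta * c / (6 * (S0 + 1))).
have q0 : 0 < eta * c / (6 * (S0 + 1)).
  apply: divr_gt0; first exact: mulr_gt0 eta0 c0.
  have : 0 < S0 + 1 by lra.
  by move=> h; rewrite mulr_gt0.
have gm0 : 0 < gm by rewrite /gm lt_min ltr01 q0.
have gm1 : gm <= 1 by rewrite /gm ge_min lexx.
have gm2 : gm <= eta * c / (6 * (S0 + 1)) by rewrite /gm ge_min lexx orbT.
set al := 1 + gm.
have al1 : 1 <= al by rewrite /al; lra.
have al0 : 0 < al by rewrite /al; lra.
have Hd : \forall h \near (0:R)^', forall i' j, `|d tau i' j - d (tau + h) i' j| <= d tau i' j * (gm / al).
  apply: filter_forall => i'; apply: filter_forall => j.
  move/cvgrPdist_le: (hdc i' j); apply.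
  by rewrite mulr_gt0 ?divr_gt0 ?hd0.
apply: filterS2 Hd near_pos => h Hh hpos.
have [dl du] : (forall i' j, d tau i' j <= al * d (tau + h) i' j) /\
               (forall i' j, d (tau + h) i' j <= al * d tau i' j).
  split => i' j; have D0 := hd0 tau tau0 i' j;
    have := Hh i' j; rewrite distrC => /absB [a1 a2].
    have e1 : al * (d tau i' j - d tau i' j * (gm / al)) = d tau i' j.
      by rewrite /al; field; rewrite gt_eqF //; lra.
    by rewrite -{1}e1 ler_wpM2l // ltW.
  have h1 : gm / al <= gm by rewrite ler_pdivrMr // ler_peMr // ltW.
  have h2 : d tau i' j * (gm / al) <= d tau i' j * gm by rewrite ler_wpM2l // ltW.
  have e2 : al * d tau i' j = d tau i' j + d tau i' j * gm by rewrite /al; ring.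
  lra.
have c1 := fix_compare c0 al1 (fun i' j => ltW (hd0 tau tau0 i' j)) dl du hS0
  (hfix tau tau0) (hfix (tau + h) hpos) i.
have hS1 i' : k%:R^-1 * \sum_(j < k) d (tau + h) i' j <= 2 * S0.
  apply: le_trans (_ : al * (k%:R^-1 * \sum_(j < k) d tau i' j) <= _).
    rewrite mulrCA ler_wpM2l ?invr_ge0 ?ler0n // mulr_sumr ler_sum // => j _; exact: du.
  have := hS0 i'; have : 0 <= k%:R^-1 * \sum_(j < k) d tau i' j.
    by rewrite mulr_ge0 ?invr_ge0 ?ler0n // sumr_ge0 // => j _; exact: ltW (hd0 tau tau0 _ _).
  have : al <= 2 by rewrite /al; lra.
  nra.
have c2 := fix_compare c0 al1 (fun i' j => ltW (hd0 (tau + h) hpos i' j)) du dl hS1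
  (hfix (tau + h) hpos) (hfix tau tau0) i.
have g6 : gm * (6 * (S0 + 1)) <= eta * c by rewrite -ler_pdivlMr //; lra.
have a3 : al * al - 1 <= 3 * gm by rewrite /al; nra.
have b1 : (al * al - 1) * S0 / c <= eta.
  rewrite ler_pdivrMr //; nra.
have b2 : (al * al - 1) * (2 * S0) / c <= eta.
  rewrite ler_pdivrMr //; nra.
set x' := x (tau + h) i in c1 c2 *.
have x'0 : 0 < x' by case: (hfix (tau + h) hpos i).
have u1 : x' <= (1 + eta) * xt.
  apply: le_trans c1 _; rewrite ler_wpM2r //; [exact: ltW | lra].
have u2 : xt <= (1 + eta) * x'.
  apply: le_trans c2 _; rewrite ler_wpM2r //; [exact: ltW | lra].
have epsE : eps = eta * xt by rewrite /eta divfK // gt_eqF.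
rewrite epsE ler_norml; apply/andP; split.
  nra.
have [le|lt] := leP x' xt; nra.
Qed.
End Abs.

Section Abs2.
Variables (R : realType) (n k : nat).

Lemma cvg_sumR {T} (F : set_system T) {FF : Filter F} (m : nat) (f : 'I_m -> T -> R) (l : 'I_m -> R) :
  (forall i, f i x @[x --> F] --> l i) -> (\sum_(i < m) f i x) @[x --> F] --> \sum_(i < m) l i.
Proof.
move=> H; apply: (@cvg_big R 'I_m +%R 0 xpredT add_continuous T F (index_enum _) f l FF).
by move=> i _; exact: H.
Qed.

Definition Phi (q : 'I_n -> 'I_k -> R) (y : 'I_n -> R) (w : 'I_n -> 'I_k -> R) : R :=
  \sum_(j < k) (k%:R^-1 * \sum_(i < n) q i j * y i) / (1 + EE w y j).

Lemma Phi_cvg {T} (F : set_system T) {FF : Filter F} (q w : T -> 'I_n -> 'I_k -> R) (y : T -> 'I_n -> R)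
  (q0 w0 : 'I_n -> 'I_k -> R) (y0 : 'I_n -> R) :
  (forall i j, q t i j @[t --> F] --> q0 i j) ->
  (forall i j, w t i j @[t --> F] --> w0 i j) ->
  (forall i, y t i @[t --> F] --> y0 i) ->
  (forall j, 1 + EE w0 y0 j != 0) ->
  Phi (q t) (y t) (w t) @[t --> F] --> Phi q0 y0 w0.
Proof.
move=> hq hw hy hn.
apply: cvg_sumR => j.
apply: cvgM.
  apply: cvgMl_tmp; apply: cvg_sumR => i; exact: cvgM.
apply: cvgV => //.
apply: cvgD; first exact: cvg_cst.
apply: cvgMl_tmp; apply: cvg_sumR => i; exact: cvgM.
Qed.

End Abs2.

Section Abs3.
Variables (R : realType) (n k : nat).

Lemma ln_diff (A A' : R) : 0 < A -> 0 < A' ->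
  (A' - A) / A' <= ln A' - ln A /\ ln A' - ln A <= (A' - A) / A.
Proof.
move=> A0 A'0.
have up : forall (u v : R), 0 < u -> 0 < v -> ln v - ln u <= (v - u) / u.
  move=> u v u0 v0.
  rewrite -ln_div ?posrE //.
  have -> : v / u = 1 + (v / u - 1) by ring.
  apply: le_trans (le_ln1Dx _) _.
    have : 0 < v / u by rewrite divr_gt0.
    lra.
  by rewrite mulrBl divff ?gt_eqF.
split; last exact: up.
have := up A' A A'0 A0.
have -> : (A - A') / A' = - ((A' - A) / A') by rewrite -mulNr opprB.
lra.
Qed.

Definition GG (d : 'I_n -> 'I_k -> R) (x : 'I_n -> R) := \sum_(j < k) ln (1 + EE d x j).

Lemma Xi_diff (c : R) d1 d2 x : Xi c d1 x - Xi c d2 x = GG d1 x - GG d2 x.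
Proof. by rewrite /Xi /GG; ring. Qed.

Lemma GG_bounds (d1 d2 : 'I_n -> 'I_k -> R) x :
  (forall i j, 0 <= d1 i j) -> (forall i j, 0 <= d2 i j) -> (forall i, 0 < x i) ->
  \sum_(j < k) (EE d1 x j - EE d2 x j) / (1 + EE d1 x j) <= GG d1 x - GG d2 x /\
  GG d1 x - GG d2 x <= \sum_(j < k) (EE d1 x j - EE d2 x j) / (1 + EE d2 x j).
Proof.
move=> h1 h2 hx.
have E1 j : 0 < 1 + EE d1 x j by have := EE_ge0 h1 (fun i => ltW (hx i)) j; lra.
have E2 j : 0 < 1 + EE d2 x j by have := EE_ge0 h2 (fun i => ltW (hx i)) j; lra.
rewrite /GG -sumrB; split; apply: ler_sum => j _;
  have [l u] := ln_diff _ _ (E2 j) (E1 j).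
  by have -> : EE d1 x j - EE d2 x j = 1 + EE d1 x j - (1 + EE d2 x j) by ring.
by have -> : EE d1 x j - EE d2 x j = 1 + EE d1 x j - (1 + EE d2 x j) by ring.
Qed.

Lemma Phi_scale (h : R) (d1 d2 : 'I_n -> 'I_k -> R) y w : h != 0 ->
  h * Phi R n k (fun i j => (d1 i j - d2 i j) / h) y w =
  \sum_(j < k) (EE d1 y j - EE d2 y j) / (1 + EE w y j).
Proof.
move=> h0; rewrite /Phi mulr_sumr; apply: eq_bigr => j _.
rewrite /EE -mulrBr -sumrB mulrA; congr (_ / _).
rewrite mulrCA; congr (_ * _); rewrite mulr_sumr; apply: eq_bigr => i _.
by field.
Qed.

End Abs3.

Section Abs4.
Variables (R : realType) (n k : nat) (c : R) (d : R -> 'I_n -> 'I_k -> R)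
  (x : R -> 'I_n -> R) (tau : R) (d' : 'I_n -> 'I_k -> R).
Hypotheses (c0 : 0 < c) (tau0 : 0 < tau)
  (hfix : forall s, 0 < s -> fixp c (d s) (x s))
  (hd0 : forall s, 0 < s -> forall i j, 0 < d s i j)
  (hdq : forall i j, (d (tau + h) i j - d tau i j) / h @[h --> (0:R)^'] --> d' i j).

Lemma near_neq0 : \forall h \near (0:R)^', h != 0.
Proof. exact: nbhs_dnbhs_neq. Qed.

Lemma hdc i j : d (tau + h) i j @[h --> (0:R)^'] --> d tau i j.
Proof.
have H : (d tau i j + h * ((d (tau + h) i j - d tau i j) / h)) @[h --> (0:R)^'] -->
         d tau i j + 0 * d' i j.
  apply: cvgD; first exact: cvg_cst.
  by apply: cvgM; [exact: cvg_within | exact: hdq].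
rewrite mul0r addr0 in H.
apply: cvg_trans H; apply: near_eq_cvg.
apply: filterS near_neq0 => h h0.
by rewrite mulrC divfK // addrC subrK.
Qed.

Lemma Xi_deriv :
  ((Xi c (d (tau + h)) (x (tau + h)) - Xi c (d tau) (x tau)) / h) @[h --> (0:R)^'] -->
  Phi R n k d' (x tau) (d tau).
Proof.
set D := Phi R n k d' (x tau) (d tau).
set qh := fun h i j => (d (tau + h) i j - d tau i j) / h.
have xt0 i : 0 < x tau i by case: (hfix tau tau0 i).
have nz : forall j, 1 + EE (d tau) (x tau) j != 0.
  move=> j; have := EE_ge0 (fun i j => ltW (hd0 tau tau0 i j)) (fun i => ltW (xt0 i)) j.
  by move=> h; rewrite gt_eqF //; lra.
have hA : Phi R n k (qh h) (x tau) (d tau) @[h --> (0:R)^'] --> D.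
  apply: (Phi_cvg R n k _ qh (fun _ => d tau) (fun _ => x tau)) => //.
  - by move=> i j; exact: cvg_cst.
  - by move=> i; exact: cvg_cst.
have hB : Phi R n k (qh h) (x (tau + h)) (d (tau + h)) @[h --> (0:R)^'] --> D.
  apply: (Phi_cvg R n k _ qh (fun h => d (tau + h)) (fun h => x (tau + h))) => //.
  - exact: hdc.
  - exact: (x_cont R n k c d x tau c0 tau0 hfix hd0 hdc).
set Q := fun h => (Xi c (d (tau + h)) (x (tau + h)) - Xi c (d tau) (x tau)) / h.
set A := fun h => Phi R n k (qh h) (x tau) (d tau).
set Bq := fun h => Phi R n k (qh h) (x (tau + h)) (d (tau + h)).
have key : \forall h \near (0:R)^', `|Q h - D| <= `|A h - D| + `|Bq h - D|.
  apply: filterS2 near_neq0 (near_pos R tau tau0) => h h0 hp.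
  set ds := d (tau + h); set xs := x (tau + h).
  have hxs i : 0 < xs i by case: (hfix _ hp i).
  have dsn i j : 0 <= ds i j := ltW (hd0 _ hp i j).
  have dtn i j : 0 <= d tau i j := ltW (hd0 _ tau0 i j).
  have u1 : Xi c ds xs <= Xi c ds (x tau) := Xi_min c0 dsn (hfix _ hp) xt0.
  have u2 : Xi c (d tau) (x tau) <= Xi c (d tau) xs := Xi_min c0 dtn (hfix _ tau0) hxs.
  have [g1 g2] := GG_bounds R n k ds (d tau) (x tau) dsn dtn xt0.
  have [g3 g4] := GG_bounds R n k ds (d tau) xs dsn dtn hxs.
  have eA : h * A h = \sum_(j < k) (EE ds (x tau) j - EE (d tau) (x tau) j) / (1 + EE (d tau) (x tau) j).
    exact: Phi_scale.
  have eB : h * Bq h = \sum_(j < k) (EE ds xs j - EE (d tau) xs j) / (1 + EE ds xs j).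
    exact: Phi_scale.
  have e1 := Xi_diff R n k c ds (d tau) (x tau).
  have e2 := Xi_diff R n k c ds (d tau) xs.
  have eQ : h * Q h = Xi c ds xs - Xi c (d tau) (x tau) by rewrite /Q mulrC divfK.
  have v1 : h * Q h <= h * A h by lra.
  have v2 : h * Bq h <= h * Q h by lra.
  have [a1 a2] := abs_lb (A h - D); have [b1 b2] := abs_lb (Bq h - D).
  have [hn|hp'] := ltP h 0.
    rewrite ler_nM2l // in v1; rewrite ler_nM2l // in v2.
    by rewrite ler_norml; apply/andP; split; lra.
  have hp'' : 0 < h by rewrite lt_neqAle eq_sym h0.
  rewrite ler_pM2l // in v1; rewrite ler_pM2l // in v2.
  by rewrite ler_norml; apply/andP; split; lra.
have tA : (A h - D) @[h --> (0:R)^'] --> (0:R).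
  by rewrite -[X in _ --> X](subrr D); apply: cvgB => //; exact: cvg_cst.
have tB : (Bq h - D) @[h --> (0:R)^'] --> (0:R).
  by rewrite -[X in _ --> X](subrr D); apply: cvgB => //; exact: cvg_cst.
have tA' : `|A h - D| @[h --> (0:R)^'] --> (0:R) by apply/norm_cvg0P.
have tB' : `|Bq h - D| @[h --> (0:R)^'] --> (0:R) by apply/norm_cvg0P.
have hN : (`|A h - D| + `|Bq h - D|) @[h --> (0:R)^'] --> (0 : R).
  by rewrite -[X in _ --> X](addr0 0); apply: cvgD.
apply: (squeeze_cvgr (f := fun h => D - (`|A h - D| + `|Bq h - D|)) (h := fun h => D + (`|A h - D| + `|Bq h - D|))).
- apply: filterS key => h; rewrite ler_distl.
  by move=> /andP [u v]; apply/andP; split; lra.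
- by rewrite -[X in _ --> X](subr0 D); apply: cvgB => //; exact: cvg_cst.
- by rewrite -[X in _ --> X](addr0 D); apply: cvgD => //; exact: cvg_cst.
Qed.
End Abs4.

From mathcomp Require Import complex.
Lemma ln_prod (R : realType) (n : nat) (f : 'I_n -> R) :
  (forall i, 0 < f i) -> ln (\prod_(i < n) f i) = \sum_(i < n) ln (f i).
Proof.
elim: n f => [|n IH] f h; first by rewrite !big_ord0 ln1.
rewrite !big_ord_recr /= lnM ?posrE ?IH //.
by apply: prodr_gt0 => i _.
Qed.

Section Model2.
Local Open Scope complex_scope.
Variables (R : realType) (B M K L : nat) (P C : R) (a : 'I_B -> 'I_K -> R)
  (t : R -> 'I_(B * M) -> R[i] -> R[i]).
Local Notation N := (B * M)%N.
Local Notation cc := (L%:R / (K%:R * P) : R).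
Local Notation z0 := ((- (L%:R / (K%:R * P)))%:C : R[i]).
Local Notation dd := (fun s i j => vbar R B M K L P C a s i j).
Local Notation xx := (fun s i => complex.Re (t s i z0)).

Lemma trE s j : K%:R^-1 * \tr (Dm R B M K L P C a s j *m TP R B M K L P t s) = EE (dd s) (xx s) j.
Proof.
rewrite /Dm /TP mulmx_diag mxtrace_diag /EE; congr (_ * _).
by apply: eq_bigr => i _; rewrite !mxE.
Qed.

Lemma Rbar_Xi s : 0 < cc -> fixp cc (dd s) (xx s) ->
  Rbar R B M K L P C a t s = (N%:R)^-1 * Xi cc (dd s) (xx s).
Proof.
move=> c0 fx.
have hx i : 0 < xx s i by case: (fx i).
have detE : \det ((L%:R / (K%:R * P)) *: TP R B M K L P t s) = \prod_i (cc * xx s i).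
  have -> : (L%:R / (K%:R * P)) *: TP R B M K L P t s = diag_mx (\row_i (cc * xx s i)).
    apply/matrixP => i j; rewrite !mxE.
    by case: (i == j); rewrite ?mulr1n ?mulr0n ?mulr0.
  by rewrite det_diag; apply: eq_bigr => i _; rewrite mxE.
have fixE : \sum_(j < K) EE (dd s) (xx s) j / (1 + EE (dd s) (xx s) j) =
            N%:R - cc * \sum_i xx s i.
  set E := EE (dd s) (xx s).
  have eE j : E j / (1 + E j) = \sum_i K%:R^-1 * dd s i j * xx s i * (1 + E j)^-1.
    rewrite {1}/E /EE mulr_sumr mulr_suml; apply: eq_bigr => i _; ring.
  under eq_bigr => j _ do rewrite eE.
  rewrite exchange_big /=.
  transitivity (\sum_i (1 - cc * xx s i)); last first.
    by rewrite sumrB sumr_const card_ord mulr_sumr.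
  apply: eq_bigr => i _.
  case: (fx i) => p e.
  have q : 0 < AA (dd s) (xx s) i + cc by rewrite -invr_gt0 -e.
  have e2 : xx s i * (AA (dd s) (xx s) i + cc) = 1 by rewrite {1}e mulVf // gt_eqF.
  have e3 : \sum_j K%:R^-1 * dd s i j * xx s i * (1 + E j)^-1 = xx s i * AA (dd s) (xx s) i.
    rewrite /AA mulr_sumr mulr_sumr; apply: eq_bigr => j _; rewrite /E; ring.
  rewrite e3; lra.
rewrite /Rbar; under eq_bigr => j _ do rewrite trE.
have S3 : \sum_(j < K) K%:R^-1 * \tr (Dm R B M K L P C a s j *m TP R B M K L P t s) /
     (1 + K%:R^-1 * \tr (Dm R B M K L P C a s j *m TP R B M K L P t s)) =
   \sum_(j < K) EE (dd s) (xx s) j / (1 + EE (dd s) (xx s) j).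
  by apply: eq_bigr => j _; rewrite trE.
rewrite S3.
rewrite detE ln_prod; last by move=> i; rewrite mulr_gt0.
rewrite fixE /Xi; ring.
Qed.
End Model2.

From mathcomp Require Import complex.
Local Open Scope classical_set_scope.
Local Open Scope ring_scope.
Local Open Scope complex_scope.

Theorem theorem2 (R : realType) (B M K L : nat) (P C : R)
  (a : 'I_B -> 'I_K -> R) (t : R -> 'I_(B * M) -> R[i] -> R[i])
  (tau vmax : R) :
  (0 < B)%N -> (0 < M)%N -> (0 < K)%N -> (0 < L)%N ->
  0 < P -> 0 < C -> (forall b k, 0 < a b k) ->
  (forall tau', 0 < tau' -> is_T_solution R B M K L P C a t tau') ->
  0 < tau ->
  (forall i j, 0 <= vbar R B M K L P C a tau i j < vmax) ->
  let Rb := Rbar R B M K L P C a t in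
  [/\ derivable Rb tau 1,
      derive1 Rb tau =
        ((B * M)%N%:R)^-1 * \sum_(j < K)
          ((K%:R)^-1 * \tr (Dm' R B M K L P C a tau j *m TP R B M K L P t tau)
           / (1 + (K%:R)^-1 * \tr (Dm R B M K L P C a tau j *m TP R B M K L P t tau)))
    & 0 < derive1 Rb tau].
Proof.
move=> B0 M0 K0 L0 P0 C0 a0 hsol tau0 _ Rb.
set c := L%:R / (K%:R * P).
have c0 : 0 < c by rewrite divr_gt0 ?mulr_gt0 ?ltr0n.
set d := fun s i j => vbar R B M K L P C a s i j.
set x := fun s i => complex.Re (t s i ((- (L%:R / (K%:R * P)))%:C)).
have hd0 : forall s, 0 < s -> forall i j, 0 < d s i j.
  by move=> s s0 i j; exact: (vbar_gt0 L0 M0 P0 C0 a0 i j s0).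
have hfix : forall s, 0 < s -> fixp c (d s) (x s).
  by move=> s s0; exact: (Tsol_fix K0 L0 P0 (hsol s s0) (fun i j => ltW (hd0 s s0 i j))).
set d' := fun i j => derive1 (fun s => vbar R B M K L P C a s i j) tau.
have hdq : forall i j, (d (tau + h) i j - d tau i j) / h @[h --> (0:R)^'] --> d' i j.
  move=> i j; have H := is_derive_vbar L0 M0 P0 C0 a0 i j (ltW tau0).
  have Hd := @ex_derive _ _ _ _ _ _ _ H.
  rewrite /d' derive1E.
  have E : (fun h => (d (tau + h) i j - d tau i j) / h) =
     (fun h => h^-1 *: (((fun s => vbar R B M K L P C a s i j) \o shift tau) (h *: 1) - d tau i j)).
    by apply/funext => h /=; rewrite /GRing.scale /= mulr1 [tau + h]addrC mulrC.
  by rewrite E; exact: Hd.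
have XD := Xi_deriv R (B * M) K c d x tau d' c0 tau0 hfix hd0 hdq.
set Dv := ((B * M)%N%:R)^-1 * Phi R (B * M) K d' (x tau) (d tau).
have HR : h^-1 *: ((Rb \o shift tau) (h *: 1) - Rb tau) @[h --> (0:R)^'] --> Dv.
  have H2 : (((B * M)%N%:R)^-1 * ((Xi c (d (tau + h)) (x (tau + h)) - Xi c (d tau) (x tau)) / h))
      @[h --> (0:R)^'] --> Dv by apply: cvgMl_tmp.
  apply: cvg_trans H2; apply: near_eq_cvg.
  apply: filterS (near_pos R tau tau0) => h hp /=.
  have e : h%:A + tau = tau + h by rewrite /GRing.scale /= mulr1 addrC.
  rewrite e /Rb (Rbar_Xi R B M K L P C a t (tau + h) c0 (hfix _ hp)).
  rewrite (Rbar_Xi R B M K L P C a t tau c0 (hfix _ tau0)).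
  have gen : forall u v u' v' : R, u = u' -> v = v' ->
    ((B * M)%N%:R)^-1 * ((u - v) / h) = h^-1 *: (((B * M)%N%:R)^-1 * u' - ((B * M)%N%:R)^-1 * v').
    by move=> u v u' v' -> ->; rewrite /GRing.scale /=; ring.
  by apply: gen.
have Hder : derivable Rb tau 1 by apply/cvg_ex; exists Dv.
have Hval : derive1 Rb tau = Dv by rewrite derive1E; apply: cvg_lim.
have xt0 i : 0 < x tau i by case: (hfix tau tau0 i).
have d'pos i j : 0 < d' i j.
  have H := is_derive_vbar L0 M0 P0 C0 a0 i j (ltW tau0).
  rewrite /d' derive1E derive_val.
  exact: (vbar'_gt0 L0 M0 P0 C0 a0 i j (ltW tau0)).
split => //.
  rewrite Hval /Dv /Phi; congr (_ * _); apply: eq_bigr => j _.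
  rewrite (trE R B M K L P C a t tau j); congr (_ / _); congr (_ * _).
  rewrite /Dm' /TP mulmx_diag mxtrace_diag; apply: eq_bigr => i _; rewrite !mxE.
  by [].
rewrite Hval /Dv mulr_gt0 ?invr_gt0 ?ltr0n ?muln_gt0 ?B0 //.
have sgt0 : forall (m : nat) (f : 'I_m -> R) (i0 : 'I_m),
    (forall i, 0 <= f i) -> 0 < f i0 -> 0 < \sum_(i < m) f i.
  move=> m f i0 h0 h1; rewrite (bigD1 i0) //=.
  have : 0 <= \sum_(i < m | i != i0) f i by apply: sumr_ge0 => i1 _.
  lra.
have EEp j : 0 < 1 + EE (d tau) (x tau) j.
  have := EE_ge0 (fun i j => ltW (hd0 tau tau0 i j)) (fun i => ltW (xt0 i)) j; lra.
have NM : (0 < B * M)%N by rewrite muln_gt0 B0 M0.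
have inner j : 0 < K%:R^-1 * \sum_(i < B * M) d' i j * x tau i.
  rewrite mulr_gt0 ?invr_gt0 ?ltr0n //.
  apply: (sgt0 _ _ (Ordinal NM)) => [i|]; first by rewrite ltW // mulr_gt0.
  by rewrite mulr_gt0.
apply: (sgt0 _ _ (Ordinal K0)) => [j|].
  by rewrite divr_ge0 // ltW.
by rewrite divr_gt0.
Qed.
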